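(* Let $\Omega$ be a finite set with $|\Omega|=n$, $(H_i\mid i\in\Omega)$ finite abelian groups with $|H_i|\geqslant2$ for all $i$, $\mathbf{H}=\prod_{i\in\Omega}H_i$, and $\mathbf{P}=(\Omega,\preccurlyeq_{\mathbf{P}})$ a poset. Then $\mathbf{P}$ is hierarchical if and only if for all $\alpha,\gamma\in\hat{\mathbf{H}}$, $\mathrm{wt}_{\overline{\mathbf{P}}}(\alpha)=\mathrm{wt}_{\overline{\mathbf{P}}}(\gamma)$ implies $\deg(F(\alpha))=\deg(F(\gamma))$.
   Context: $\hat{\mathbf{H}}$ is the character group of $\mathbf{H}$, identified with $\prod_i\hat{H_i}$ via $\alpha(\beta)=\prod_i\alpha_{(i)}(\beta_{(i)})$; $\mathrm{supp}$ of a codeword is the set of coordinates where it is not the identity. For a poset $\mathbf{Q}$ on $\Omega$, $\langle B\rangle_{\mathbf{Q}}=\{a:\exists b\in B, a\preccurlyeq_{\mathbf{Q}}b\}$ and $\mathrm{wt}_{\mathbf{Q}}(\beta)=|\langle\mathrm{supp}(\beta)\rangle_{\mathbf{Q}}|$. $\overline{\mathbf{P}}$ is the dual poset. For $\alpha\in\hat{\mathbf{H}}$, $F(\alpha)=\sum_{l=0}^{n}\big(\sum_{\beta\in\mathbf{H},\ \mathrm{wt}_{\mathbf{P}}(\beta)=l}\alpha(\beta)\big)x^l\in\mathbb{C}[x]$. $\mathrm{len}(y)$ is the largest cardinality of a chain in $\mathbf{P}$ with greatest element $y$; $\mathbf{P}$ is hierarchical if $\mathrm{len}(u)+1\leqslant\mathrm{len}(v)$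 implies $u\preccurlyeq_{\mathbf{P}}v$. *)

(* Defs.v *)
From HB Require Import structures.
From mathcomp Require Import all_boot all_order all_algebra all_field.
Set Implicit Arguments. Unset Strict Implicit. Unset Printing Implicit Defensive.
Import Order.TTheory GRing.Theory Num.Theory.
Local Open Scope ring_scope.

(* Finite abelian groups are modelled as finZmodType (additive notation).
   Characters take values in algC (the algebraic complex numbers). *)

Section Defs.
Variable Omega : finType.

Definition is_poset (le : rel Omega) : Prop :=
  [/\ reflexive le, antisymmetric le & transitive le].

Definition dual_rel (le : rel Omega) : rel Omega := fun a b => le b a.

Definition ideal (le : rel Omega) (B : {set Omega}) : {set Omega} :=
  [set a | [exists b in B, le a b]].

Definition is_chain (le : rel Omega) (C : {set Omega}) : bool :=
  [forall x in C, forall y in C, le x y || le y x].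

Definition len (le : rel Omega) (y : Omega) : nat :=
  \max_(C : {set Omega} | [&& is_chain le C, y \in C & [forall c in C, le c y]]) #|C|.

Definition hierarchical (le : rel Omega) : Prop :=
  forall u v, (len le u + 1 <= len le v)%N -> le u v.

Variable H : Omega -> finZmodType.

Definition codeword := {dffun forall i : Omega, H i}.

Definition supp (beta : codeword) : {set Omega} := [set i | beta i != 0].

Definition wt (le : rel Omega) (beta : codeword) : nat := #|ideal le (supp beta)|.

Definition is_character (G : finZmodType) (chi : G -> algC) : Prop :=
  chi 0 = 1 /\ forall a b, chi (a + b) = chi a * chi b.

(* elements of the character group hat H, identified with families of
   characters alpha_(i) of the H_i *)
Definition is_char_family (alpha : forall i, H i -> algC) : Prop :=
  forall i, is_character (alpha i).

Definition char_app (alpha : forall i, H i -> algC) (beta : codeword) : algC :=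
  \prod_(i : Omega) alpha i (beta i).

Definition char_supp (alpha : forall i, H i -> algC) : {set Omega} :=
  [set i | ~~ [forall h : H i, alpha i h == 1]].

Definition char_wt (le : rel Omega) (alpha : forall i, H i -> algC) : nat :=
  #|ideal le (char_supp alpha)|.

Definition Fpoly (le : rel Omega) (alpha : forall i, H i -> algC) : {poly algC} :=
  \sum_(l < #|Omega|.+1)
     (\sum_(beta : codeword | wt le beta == l) char_app alpha beta) *: 'X^l.

End Defs.

Definition deg (p : {poly algC}) : nat := (size p).-1.

(* Main.v *)
Require Import Defs.
From HB Require Import structures.
From mathcomp Require Import all_boot all_order all_algebra all_field.
From mathcomp Require Import all_fingroup all_solvable all_character.
Set Implicit Arguments. Unset Strict Implicit. Unset Printing Implicit Defensive.
Import Order.TTheory GRing.Theory Num.Theory.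
Section Poset.
Variable Omega : finType.
Variable le : rel Omega.
Hypothesis Hpo : is_poset le.

Let leR : reflexive le. Proof. by case: Hpo. Qed.
Let leA : antisymmetric le. Proof. by case: Hpo. Qed.
Let leT : transitive le. Proof. by case: Hpo. Qed.

Definition ltp x y := (x != y) && le x y.
Definition upc (S : {set Omega}) := [set x | [exists s in S, le s x]].
Definition ups (S : {set Omega}) := [set x | [exists s in S, ltp s x]].
Definition down x := [set y | le y x].

Lemma len_spec y : exists C : {set Omega},
  [&& is_chain le C, y \in C & [forall c in C, le c y]] /\ #|C| = len le y.
Proof.
have P1 : [&& is_chain le [set y], y \in [set y] & [forall c in [set y], le c y]].
  apply/and3P; split; last 2 first.
  - by rewrite set11.
  - by apply/forall_inP => c; rewrite inE => /eqP ->.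
  by apply/forall_inP => x; rewrite inE => /eqP ->; apply/forall_inP => z; rewrite inE => /eqP ->; rewrite leR.
rewrite /len (@bigop.bigmax_eq_arg _ [set y]) //.
case: arg_maxnP => // C HC _; by exists C.
Qed.

Lemma len_ge C y : is_chain le C -> y \in C -> [forall c in C, le c y] -> (#|C| <= len le y)%N.
Proof. by move=> h1 h2 h3; rewrite /len; apply: leq_bigmax_cond; rewrite h1 h2 h3. Qed.

Lemma lt_len x y : ltp x y -> (len le x < len le y)%N.
Proof.
case/andP => nxy lxy.
have [C [/and3P [hC xC hCx] <-]] := len_spec x.
have yC : y \notin C.
  apply/negP => yC; move/forall_inP: hCx => /(_ _ yC) lyx.
  by move: nxy; rewrite (@leA x y) ?lxy ?lyx ?eqxx.
have hle : forall c, c \in C -> le c y.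
  by move=> c cC; apply: leT lxy; move/forall_inP: hCx; apply.
have -> : (#|C|.+1 = #|y |: C|)%N by rewrite cardsU1 yC.
apply: len_ge.
- apply/forall_inP => a; rewrite in_setU1 => /predU1P [-> | aC];
    apply/forall_inP => b; rewrite in_setU1 => /predU1P [-> | bC].
  + by rewrite leR.
  + by rewrite hle ?orbT.
  + by rewrite hle.
  + by move/forall_inP: hC => /(_ _ aC)/forall_inP/(_ _ bC).
- by rewrite setU11.
- apply/forall_inP => a; rewrite in_setU1 => /predU1P [-> | aC]; first exact: leR.
  exact: hle.
Qed.

Lemma le_len x y : le x y -> (len le x <= len le y)%N.
Proof.
move=> lxy; case: (eqVneq x y) => [-> // | nxy].
by apply: ltnW; apply: lt_len; rewrite /ltp nxy lxy.
Qed.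

Lemma hier_struct (Hh : hierarchical le) S : S != set0 ->
  exists m, ups S = [set x | (m < len le x)%N] /\
    (#|[set x | (m < len le x)%N]| < #|upc S| <= #|[set x | (m <= len le x)%N]|)%N.
Proof.
case/set0Pn => s sS.
case: (@arg_minnP _ s (mem S) (len le) sS) => s0 s0S s0min.
have E : ups S = [set x | (len le s0 < len le x)%N].
  apply/setP => x; rewrite !inE; apply/existsP/idP.
  - case=> t /andP [tS ltx]; apply: leq_trans (lt_len ltx); exact: s0min.
  - move=> hx; exists s0; apply/andP; split => //; rewrite /ltp.
    rewrite Hh ?addn1 // andbT; apply/eqP => e; by move: hx; rewrite e ltnn.
exists (len le s0); split => //.
apply/andP; split.
- rewrite -E; apply: proper_card; apply/properP; split.
  + apply/subsetP => x; rewrite !inE => /exists_inP [t tS /andP [_ ltx]].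
    by apply/exists_inP; exists t.
  + exists s0; first by rewrite inE; apply/exists_inP; exists s0 => //; apply: leR.
    by rewrite E inE ltnn.
- apply: subset_leq_card; apply/subsetP => x; rewrite !inE => /exists_inP [t tS ltx].
  apply: leq_trans (s0min _ tS) (le_len ltx).
Qed.

Lemma upc0 S : upc S = set0 -> S = set0.
Proof.
move=> h; apply/setP => x; rewrite inE; apply/negbTE/negP => xS.
have : x \in upc S by rewrite inE; apply/exists_inP; exists x => //; apply: leR.
by rewrite h inE.
Qed.

Lemma hier_ups (Hh : hierarchical le) S S' :
  #|upc S| = #|upc S'| -> #|ups S| = #|ups S'|.
Proof.
have ups0 : ups set0 = set0.
  by apply/setP => x; rewrite !inE; apply/exists_inP => -[t]; rewrite inE.
have upc0' : upc set0 = set0.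
  by apply/setP => x; rewrite !inE; apply/exists_inP => -[t]; rewrite inE.
case: (eqVneq S set0) => [-> | nS]; case: (eqVneq S' set0) => [-> | nS'] //.
- by rewrite upc0' cards0 => /esym/eqP; rewrite cards_eq0 => /eqP/upc0 => e; move: nS'; rewrite e eqxx.
- by rewrite upc0' cards0 => /eqP; rewrite cards_eq0 => /eqP/upc0 => e; move: nS; rewrite e eqxx.
have [m [Em /andP [h1 h2]]] := hier_struct Hh nS.
have [m' [Em' /andP [h1' h2']]] := hier_struct Hh nS'.
move=> eqc; rewrite Em Em'.
case: (ltngtP m m') => [lmm | lmm | -> //].
- have : (#|[set x | (m' <= len le x)%N]| <= #|[set x | (m < len le x)%N]|)%N.
    by apply: subset_leq_card; apply/subsetP => x; rewrite !inE; apply: leq_trans.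
  by move=> h; move: (leq_trans h2' h); rewrite -eqc => /(leq_trans h1); rewrite ltnn.
- have : (#|[set x | (m <= len le x)%N]| <= #|[set x | (m' < len le x)%N]|)%N.
    by apply: subset_leq_card; apply/subsetP => x; rewrite !inE; apply: leq_trans.
  by move=> h; move: (leq_trans h2 h); rewrite eqc => /(leq_trans h1'); rewrite ltnn.
Qed.


Lemma two_plus_one u v : (len le u + 1 <= len le v)%N -> ~~ le u v ->
  exists a0 b0 c0, [/\ ltp a0 b0, ~~ le c0 a0, ~~ le a0 c0, ~~ le c0 b0 & ~~ le b0 c0].
Proof.
move=> hl nuv.
have nvu : ~~ le v u.
  apply/negP => /le_len h; move: (leq_trans hl h); rewrite addn1 ltnn //.
have [C [/and3P [hC vC hCv] eC]] := len_spec v.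
have hle : forall c, c \in C -> le c v by move=> c cC; move/forall_inP: hCv; apply.
case: (boolP [exists c in C, (c != v) && ~~ le u c && ~~ le c u]).
  case/exists_inP => c cC /andP [/andP [ncv nuc] ncu].
  exists c, v, u; split => //; by rewrite /ltp ncv hle.
rewrite negb_exists_in => /forall_inP hall.
have hcu : forall c, c \in C -> c != v -> le c u.
  move=> c cC ncv; move: (hall c cC); rewrite ncv /= negb_and !negbK => /orP [luc|//].
  by move: nuv; rewrite (leT luc (hle c cC)).
have uC : u \notin C by apply/negP => /hle; apply/negP.
pose C' := u |: C :\ v.
have : (#|C'| <= len le u)%N.
  apply: len_ge.
  - apply/forall_inP => a; rewrite !inE => /predU1P [-> | /andP [nav aC]];
      apply/forall_inP => b; rewrite !inE => /predU1P [-> | /andP [nbv bC]].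
    + by rewrite leR.
    + by rewrite hcu ?orbT.
    + by rewrite hcu.
    + by move/forall_inP: hC => /(_ _ aC)/forall_inP/(_ _ bC).
  - by rewrite setU11.
  - apply/forall_inP => a; rewrite !inE => /predU1P [-> | /andP [nav aC]]; first exact: leR.
    exact: hcu.
have -> : #|C'| = #|C|.
  rewrite /C' cardsU1 inE negb_and uC orbT add1n.
  by rewrite (cardsD1 v C) vC add1n.
by rewrite eC => h; move: (leq_trans hl h); rewrite addn1 ltnn.
Qed.

Lemma refine_triple a0 b0 c0 :
  [/\ ltp a0 b0, ~~ le c0 a0, ~~ le a0 c0, ~~ le c0 b0 & ~~ le b0 c0] ->
  exists a b c, [/\ ltp a b, forall y, ltp a y -> ~~ ltp y b, ~~ le a c,
     forall y, ltp c y -> ltp a y & ~~ le c b].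
Proof.
case=> lab0 nca0 nac0 ncb0 nbc0.
pose P := fun x => [&& ~~ le x a0, ~~ le a0 x, ~~ le x b0 & ~~ le b0 x].
have Pc0 : P c0 by rewrite /P nca0 nac0 ncb0 nbc0.
have downlt : forall x y, ltp x y -> (#|down x| < #|down y|)%N.
  move=> x y /andP [nxy lxy]; apply: proper_card; apply/properP; split.
    by apply/subsetP => z; rewrite !inE => lzx; apply: leT lzx lxy.
  exists y; first by rewrite inE leR.
  rewrite inE; apply/negP => lyx; move: nxy; by rewrite (@leA x y) ?lxy ?lyx ?eqxx.
case: (@arg_maxnP _ c0 P (fun x => #|down x|) Pc0) => c Pc cmax.
have Pb0 : ltp a0 b0 && le b0 b0 by rewrite lab0 leR.
case: (@arg_minnP _ b0 (fun y => ltp a0 y && le y b0) (fun x => #|down x|) Pb0) => b /andP [lab lbb0] bmin.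
move: Pc; rewrite /P => /and4P [nca nac ncb0' nb0c].
exists a0, b, c; split => //.
- move=> y lay; apply/negP => lyb.
  have := bmin y; rewrite lay (leT (andP lyb).2 lbb0) => /(_ isT).
  by move=> h; move: (leq_trans (downlt _ _ lyb) h); rewrite ltnn.
- move=> y lcy; have hP : ~~ P y.
    by apply/negP => /cmax h; move: (leq_trans (downlt _ _ lcy) h); rewrite ltnn.
  move: hP; rewrite /P !negb_and !negbK.
  case/andP: lcy => ncy lcy.
  have ncy' : ~~ le y a0 by apply/negP => /(leT lcy); apply/negP.
  have ncy'' : ~~ le y b0 by apply/negP => /(leT lcy); apply/negP.
  rewrite (negbTE ncy') (negbTE ncy'') /= => /orP [lay | lb0y].
    rewrite /ltp lay andbT; apply/eqP => e; move: nca; by rewrite e lcy.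
  rewrite /ltp (leT (andP lab0).2 lb0y) andbT; apply/eqP => e; move: nca; by rewrite e lcy.
- by apply/negP => /(fun h => leT h lbb0); apply/negP.
Qed.


Lemma triple_sets a b c : [/\ ltp a b, forall y, ltp a y -> ~~ ltp y b, ~~ le a c,
     forall y, ltp c y -> ltp a y & ~~ le c b] ->
  #|upc [set a]| = #|upc (c |: ups [set a])| /\ (#|ups (c |: ups [set a])| < #|ups [set a]|)%N.
Proof.
case=> lab bcov nac hc ncb.
have upsa : ups [set a] = [set x | ltp a x].
  apply/setP => x; rewrite !inE; apply/exists_inP/idP => [[t] | h]; first by rewrite inE => /eqP ->.
  by exists a; rewrite ?inE.
have upca : upc [set a] = a |: [set x | ltp a x].
  apply/setP => x; rewrite !inE; apply/exists_inP/idP => [[t] | h].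
    rewrite inE => /eqP -> lax; rewrite /ltp lax andbT; case: eqVneq => //=.
  exists a; rewrite ?inE //; case/predU1P: h => [-> | /andP [] //]; exact: leR.
have ltpT : forall x y z, ltp x y -> le y z -> ltp x z.
  move=> x y z /andP [nxy lxy] lyz; rewrite /ltp (leT lxy lyz) andbT.
  apply/eqP => e; move: nxy; rewrite e in lxy *; by rewrite (@leA y z) ?lxy ?lyz ?eqxx.
have upcB : upc (c |: ups [set a]) = c |: [set x | ltp a x].
  rewrite upsa; apply/setP => x; rewrite !inE; apply/exists_inP/idP => [[t] | h].
    rewrite !inE => /predU1P [-> lcx | lat ltx].
      case: (eqVneq c x) => [// | ncx].
      by rewrite hc ?orbT // /ltp ncx lcx.
    by rewrite (ltpT _ _ _ lat ltx) orbT.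
  case/predU1P: h => [-> | lax]; first by exists c; rewrite ?inE ?eqxx ?leR.
  by exists x; rewrite ?inE ?lax ?orbT ?leR.
split.
  rewrite upca upcB !cardsU1 !inE; congr (_ + _)%N.
  by rewrite /ltp eqxx (negbTE nac) andbF.
rewrite [in X in (_ < X)%N]upsa; apply: (@leq_ltn_trans #|[set x | ltp a x] :\ b|); last first.
  by rewrite (cardsD1 b [set x | ltp a x]) inE lab.
apply: subset_leq_card; apply/subsetP => x; rewrite inE => /exists_inP [t]; rewrite upsa.
rewrite !inE => /predU1P [-> lcx | lat].
  have lax := hc _ lcx; rewrite lax andbT; apply/eqP => e; move: ncb; rewrite -e.
  by case/andP: lcx => _ ->.
move=> ltx; rewrite (ltpT _ _ _ lat (andP ltx).2) andbT.
apply/eqP => e; move: (bcov _ lat); by rewrite -e ltx.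
Qed.

Lemma conv_hier : (forall S S', #|upc S| = #|upc S'| -> #|ups S| = #|ups S'|) ->
  hierarchical le.
Proof.
move=> hQ u v hl; apply/negPn/negP => nuv.
have [a0 [b0 [c0 h]]] := two_plus_one hl nuv.
have [a [b [c h']]] := refine_triple h.
have [e1 e2] := triple_sets h'.
by move: e2; rewrite (hQ _ _ e1) ltnn.
Qed.

End Poset.

Local Open Scope ring_scope.
Definition nchar (U : finZmodType) : U -> algC :=
  fun x => match [pick i : Iirr [set: U]%G | i != 0] with
           | Some i => 'chi_i x | None => 1 end.
Arguments nchar : clear implicits.

Lemma nchar_ok (U : finZmodType) : (1 < #|U|)%N ->
  is_character (nchar U) /\ ~~ [forall h, nchar U h == 1].
Proof.
move=> U2.
pose G := [set: U]%G.
have abG : abelian G by apply: FinRing.zmod_abelian.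
have NG : Nirr G = #|U|.
  by rewrite NirrE; move: abG; rewrite card_classes_abelian => /eqP ->; rewrite cardsT.
rewrite /nchar; case: pickP => [i ni | hn]; last first.
  have i1 : (1 < Nirr G)%N by rewrite NG.
  by move: (hn (Ordinal i1)).
have lin := (char_abelianP G abG i).
split.
  split; first by have := lin_char1 lin; rewrite -FinRing.zmod1gE.
  by move=> a b; rewrite -FinRing.zmodMgE lin_charM // inE.
apply/negP => /forallP H1.
have : 'chi_i = 'chi_0.
  apply/cfunP => x; rewrite irr0 cfun1E inE /=.
  by apply/eqP; apply: H1.
by move/irr_inj/eqP; rewrite (negbTE ni).
Qed.

Lemma char_sum0 (U : finZmodType) (chi : U -> algC) : is_character chi ->
  ~~ [forall h, chi h == 1] -> \sum_h chi h = 0.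
Proof.
case=> c0 cD; rewrite negb_forall => /existsP [h0 nh0].
have E : \sum_h chi h = chi h0 * \sum_h chi h.
  rewrite {1}(reindex_inj (addrI h0)) mulr_sumr; apply: eq_bigr => h _; by rewrite cD.
have : (1 - chi h0) * \sum_h chi h = 0 by rewrite mulrBl mul1r -E subrr.
by move/eqP; rewrite mulf_eq0 subr_eq0 eq_sym (negbTE nh0) /= => /eqP.
Qed.

Lemma char_sum1 (U : finZmodType) (chi : U -> algC) :
  [forall h, chi h == 1] -> \sum_h chi h = #|U|%:R.
Proof.
move/forallP => h1; rewrite (eq_bigr (fun _ => 1)); last by move=> h _; apply/eqP.
by rewrite sumr_const cardT -cardE.
Qed.

Lemma sum_dffun_prod (R : comNzRingType) (I : finType) (T_ : I -> finType)
  (g : forall i, T_ i -> R) :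
  \sum_(b : {dffun forall i, T_ i}) \prod_i g i (b i) = \prod_i \sum_(h : T_ i) g i h.
Proof.
rewrite (reindex (@dffun_of_fprod I T_)); last first.
  by apply: onW_bij; apply: dffun_of_fprod_bij.
pose P_ := fun i => [ffun h => g i h] : {ffun T_ i -> R}.
have E1 : forall t : fprod T_, \prod_i g i (dffun_of_fprod t i) = \prod_i P_ i (t i).
  by move=> t; apply: eq_bigr => i _; rewrite /P_ !ffunE.
under eq_bigr do rewrite E1.
rewrite (@big_fprod R 0 1 *%R +%R I T_ P_).
have E2 : forall i, \sum_(h : T_ i) g i h = \sum_(j in tagged_with T_ i) untag 0 (P_ i) j.
  move=> i; rewrite (@big_tag R 0 +%R I T_); apply: eq_bigr => j _.
  by rewrite /untag; case: eqP => // e; rewrite ffunE.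
under [RHS]eq_bigr do rewrite E2.
by rewrite bigA_distr_big_dep.
Qed.

Section Alg.
Variable Omega : finType.
Variable H : Omega -> finZmodType.
Variable le : rel Omega.
Hypothesis Hpo : is_poset le.
Variable alpha : forall i, H i -> algC.
Arguments alpha : clear implicits.
Hypothesis Ha : is_char_family alpha.

Let leR : reflexive le. Proof. by case: Hpo. Qed.
Let leA : antisymmetric le. Proof. by case: Hpo. Qed.
Let leT : transitive le. Proof. by case: Hpo. Qed.
Let a0 (i : Omega) : alpha i 0 = 1. Proof. by case: (Ha i). Qed.
Let aD (i : Omega) (x y : H i) : alpha i (x + y) = alpha i x * alpha i y. Proof. by case: (Ha i). Qed.

Definition shift s (h0 : H s) (b : codeword H) : codeword H :=
  [ffun i => b i + @dfwith Omega H (fun j => 0) s h0 i].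

Lemma char_app_shift s (h0 : H s) b : char_app alpha (shift h0 b) = char_app alpha b * alpha s h0.
Proof.
rewrite /char_app; under eq_bigr do rewrite ffunE aD.
rewrite big_split /=; congr (_ * _).
rewrite (bigD1 s) //= dfwith_in big1 ?mulr1 // => i nis.
by rewrite dfwith_out ?a0 // eq_sym.
Qed.

Lemma shift_inj s (h0 : H s) : injective (@shift s h0).
Proof. by move=> b b' /ffunP e; apply/ffunP => i; move: (e i); rewrite !ffunE => /addIr. Qed.

Lemma shift_out s (h0 : H s) b i : i != s -> shift h0 b i = b i.
Proof. by move=> nis; rewrite ffunE dfwith_out 1?eq_sym // addr0. Qed.

Lemma ideal_agree (b b' : codeword H) s x : (forall i, i != s -> b' i = b i) ->
  ltp le s x -> x \in ideal le (supp b) -> ideal le (supp b') = ideal le (supp b).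
Proof.
move=> hag /andP [nsx lsx]; rewrite inE => /exists_inP [c cb lxc].
have ncs : c != s.
  apply/eqP => e; move: nsx; rewrite -e in lsx *.
  by rewrite (@leA x c) ?lsx ?lxc ?eqxx.
have cb' : c \in supp b' by move: cb; rewrite !inE hag.
have lsc : le s c := leT lsx lxc.
apply/setP => y; rewrite !inE; apply/exists_inP/exists_inP => -[d db lyd].
- case: (eqVneq d s) => [e | nds].
    by exists c => //; rewrite -e in lsc; apply: leT lyd lsc.
  by exists d => //; move: db; rewrite !inE hag.
- case: (eqVneq d s) => [e | nds].
    by exists c => //; rewrite -e in lsc; apply: leT lyd lsc.
  by exists d => //; move: db; rewrite !inE hag.
Qed.

Definition TI (I : {set Omega}) :=
  \sum_(b : codeword H | ideal le (supp b) == I) char_app alpha b.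

Lemma vanish (I : {set Omega}) s x : s \in char_supp alpha -> x \in I -> ltp le s x -> TI I = 0.
Proof.
rewrite inE negb_forall => /existsP [h0 nh0] xI lsx.
have E : TI I = TI I * alpha s h0.
  rewrite {1}/TI (reindex_inj (@shift_inj s h0)) /TI mulr_suml.
  apply: eq_big => b; last by move=> _; rewrite char_app_shift.
  apply/eqP/eqP => e.
  - rewrite -e; apply: (@ideal_agree (shift h0 b) b s x) => //; last by rewrite e.
    by move=> i nis; rewrite shift_out.
  - rewrite -e; apply: (@ideal_agree b (shift h0 b) s x) => //; last by rewrite e.
    by move=> i nis; rewrite shift_out.
have : TI I * (1 - alpha s h0) = 0 by rewrite mulrBr mulr1 -E subrr.
by move/eqP; rewrite mulf_eq0 subr_eq0 (eq_sym 1) (negbTE nh0) orbF => /eqP.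
Qed.


Definition cl l := \sum_(b : codeword H | wt le b == l) char_app alpha b.

Lemma cl_part l : cl l = \sum_(I : {set Omega} | #|I| == l) TI I.
Proof.
rewrite /cl (partition_big (fun b => ideal le (supp b)) (fun I : {set Omega} => #|I| == l)); last by [].
apply: eq_bigr => I /eqP hI; apply: eq_bigl => b; rewrite /wt.
by apply/andP/eqP => [[_ /eqP] // | e]; rewrite e hI.
Qed.

Definition Dset := ~: ups le (char_supp alpha).

Lemma TI_out (I : {set Omega}) : ~~ (I \subset Dset) -> TI I = 0.
Proof.
case/subsetPn => x xI; rewrite inE negbK inE => /exists_inP [s sS lsx].
exact: vanish sS xI lsx.
Qed.

Lemma cl_gt l : (#|Dset| < l)%N -> cl l = 0.
Proof.
move=> hl; rewrite cl_part big1 // => I /eqP hI; apply: TI_out; apply/negP => sub.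
by move: (subset_leq_card sub); rewrite hI leqNgt hl.
Qed.

Lemma cl_D : cl #|Dset| = TI Dset.
Proof.
rewrite cl_part (bigD1 Dset) //= big1 ?addr0 // => I /andP [/eqP hI nID]; apply: TI_out.
apply/negP => sub; move: nID; by rewrite eqEcard sub hI leqnn.
Qed.


Hypothesis H2 : forall i, (1 < #|H i|)%N.

Definition Mset := [set x in Dset | [forall y in Dset, le x y ==> (y == x)]].

Lemma downD x y : y \in Dset -> le x y -> x \in Dset.
Proof.
rewrite !inE => /exists_inP nyS lxy; apply/exists_inP => -[s sS /andP [nsx lsx]].
apply: nyS; exists s => //; rewrite /ltp (leT lsx lxy) andbT.
apply/eqP => e; move: nsx; rewrite e in lsx *; by rewrite (@leA x y) ?lxy ?lsx ?eqxx.
Qed.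

Lemma below_max x : x \in Dset -> exists2 m, m \in Mset & le x m.
Proof.
move=> xD.
have Px : (x \in Dset) && le x x by rewrite xD leR.
case: (@arg_maxnP _ x (fun y => (y \in Dset) && le x y) (fun y => #|[set z | le z y]|) Px).
move=> m /andP [mD lxm] mmax; exists m => //.
rewrite inE mD /=; apply/forall_inP => y yD; apply/implyP => lmy; apply/negPn/negP => nym.
have : (#|[set z | le z m]| < #|[set z | le z y]|)%N.
  apply: proper_card; apply/properP; split.
    by apply/subsetP => z; rewrite !inE => lzm; apply: leT lzm lmy.
  exists y; first by rewrite inE leR.
  rewrite inE; apply/negP => lym; move: nym; by rewrite (@leA y m) ?lym ?lmy ?eqxx.
move=> h; have := mmax y; rewrite yD (leT lxm lmy) => /(_ isT) h2; move: (leq_trans h h2); by rewrite ltnn.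
Qed.

Lemma notM_triv i : i \in Dset -> i \notin Mset -> [forall h, alpha i h == 1].
Proof.
move=> iD; rewrite inE iD /= negb_forall_in => /exists_inP [y yD].
rewrite negb_imply => /andP [liy nyi]; apply/negPn/negP => iS.
move: yD; rewrite !inE => /exists_inP; apply; exists i; first by rewrite inE.
by rewrite /ltp liy andbT eq_sym.
Qed.

Definition Qp i (h : H i) : bool :=
  if i \in Dset then (i \in Mset) ==> (h != 0) else h == 0.

Lemma idealD_char (b : codeword H) : (ideal le (supp b) == Dset) = [forall i, Qp (b i)].
Proof.
apply/eqP/forallP => [e i | hQ].
- rewrite /Qp; case: ifP => iD.
    apply/implyP => iM; move: iD; rewrite -e inE => /exists_inP [c cb lic].
    have cD : c \in Dset by rewrite -e inE; apply/exists_inP; exists c => //; apply: leR.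
    move: iM; rewrite inE => /andP [_ /forall_inP /(_ _ cD)]; rewrite lic /= => /eqP ci.
    by move: cb; rewrite inE ci.
  apply/negPn/negP => nb.
  have : i \in ideal le (supp b) by rewrite inE; apply/exists_inP; exists i; rewrite ?inE ?leR.
  by rewrite e iD.
- have suppD : forall c, c \in supp b -> c \in Dset.
    move=> c; rewrite inE; apply: contraR => ncD; have := hQ c; rewrite /Qp (negbTE ncD).
    by move=> ->.
  apply/setP => y; apply/idP/idP.
    by rewrite inE => /exists_inP [c cb lyc]; apply: downD (suppD _ cb) lyc.
  move=> yD; have [m mM lym] := below_max yD.
  rewrite inE; apply/exists_inP; exists m => //.
  have mD : m \in Dset by move: mM; rewrite inE => /andP [].
  by have := hQ m; rewrite /Qp mD mM /= inE.
Qed.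

Lemma TI_D : TI Dset != 0.
Proof.
rewrite /TI.
under eq_bigl do rewrite idealD_char.
rewrite big_mkcond /=.
rewrite (eq_bigr (fun b : codeword H => \prod_i (if Qp (b i) then alpha i (b i) else 0))); last first.
  move=> b _; case: (boolP [forall i, Qp (b i)]) => [/forallP hQ | /forallPn [i ni]].
    by rewrite /char_app; apply: eq_bigr => i _; rewrite hQ.
  by rewrite (bigD1 i) //= (negbTE ni) mul0r.
rewrite (@sum_dffun_prod _ Omega (fun i => H i) (fun i h => if Qp h then alpha i h else 0)).
apply/prodf_neq0 => i _.
rewrite -big_mkcond /=.
rewrite /Qp; case iD: (i \in Dset); last first.
  by rewrite (big_pred1_eq _ (0 : H i)) a0 oner_neq0.
case iM: (i \in Mset) => /=.
- have E := @bigD1 algC +%R 0 (H i) (0 : H i) xpredT (alpha i) isT; rewrite /= a0 in E.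
  have -> : \sum_(h : H i | h != 0) alpha i h = \sum_h alpha i h - 1.
    by rewrite E addrC addrK.
  case: (boolP [forall h, alpha i h == 1]) => triv.
    rewrite char_sum1 // subr_eq0 (_ : 1 = 1%:R) // eqr_nat.
    by rewrite neq_ltn H2 orbT.
  by rewrite char_sum0 // sub0r oppr_eq0 oner_neq0.
- rewrite char_sum1; last exact: notM_triv (negbT iM).
  by rewrite pnatr_eq0 -lt0n (ltn_trans _ (H2 i)).
Qed.

Lemma coefF l : (Fpoly le alpha)`_l = if (l <= #|Omega|)%N then cl l else 0.
Proof.
rewrite /Fpoly coef_sum.
under eq_bigr do rewrite coefZ coefXn.
case: ifP => hl.
  have hl' : (l < #|Omega|.+1)%N by [].
  rewrite (bigD1 (Ordinal hl')) //= eqxx mulr1 [X in _ + X]big1 ?addr0 // => k nk.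
  by rewrite (_ : (l == k) = false) ?mulr0 //; apply/negbTE; apply: contra nk => /eqP e; apply/eqP/val_inj.
rewrite big1 // => k _; rewrite (_ : (l == k) = false) ?mulr0 //.
by apply/negbTE/eqP => e; move: hl; rewrite e -ltnS ltn_ord.
Qed.

Lemma deg_formula : deg (Fpoly le alpha) = #|Dset|.
Proof.
rewrite /deg; suff -> : size (Fpoly le alpha) = #|Dset|.+1 by [].
apply/eqP; rewrite eqn_leq; apply/andP; split.
  apply/leq_sizeP => j hj; rewrite coefF; case: ifP => // _; exact: cl_gt.
rewrite ltnNge; apply/negP => /leq_sizeP /(_ _ (leqnn _)).
rewrite coefF max_card cl_D => /eqP; by rewrite (negbTE TI_D).
Qed.

End Alg.

Local Close Scope ring_scope.

Section Fam.
Local Open Scope ring_scope.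
Variable Omega : finType.
Variable H : Omega -> finZmodType.

Definition charS (S : {set Omega}) : forall i, H i -> algC :=
  fun i => if i \in S then nchar (H i) else fun _ => 1.

Hypothesis H2 : forall i, (1 < #|H i|)%N.

Lemma charS_fam S : is_char_family (charS S).
Proof.
move=> i; rewrite /charS; case: (i \in S); first by case: (nchar_ok (H2 i)).
by split => // a b; rewrite mulr1.
Qed.

Lemma charS_supp S : char_supp (charS S) = S.
Proof.
apply/setP => i; rewrite inE /charS; case: (i \in S); first by case: (nchar_ok (H2 i)).
by apply/negbF/forallP.
Qed.
End Fam.

Unset Implicit Arguments.

Theorem theorem2p3 (Omega : finType) (H : Omega -> finZmodType) (le : rel Omega) :
  (forall i, (1 < #|H i|)%N) ->
  is_poset le ->
  hierarchical le <->
  (forall alpha gamma : forall i, H i -> algC,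
     is_char_family alpha -> is_char_family gamma ->
     char_wt (dual_rel le) alpha = char_wt (dual_rel le) gamma ->
     deg (Fpoly le alpha) = deg (Fpoly le gamma)).
Proof.
move=> H2 Hpo; split.
- move=> Hh alpha gamma Ha Hg e.
  rewrite (deg_formula Hpo Ha H2) (deg_formula Hpo Hg H2) /Dset.
  have e' := hier_ups Hpo Hh e.
  apply/eqP; rewrite -(eqn_add2l #|ups le (char_supp alpha)|) {2}e' !cardsC //.
- move=> hD; apply: (conv_hier Hpo) => S S' e.
  have := hD (@charS _ H S) (@charS _ H S') (charS_fam H2 S) (charS_fam H2 S').
  rewrite /char_wt !(charS_supp H2) => /(_ e).
  rewrite (deg_formula Hpo (charS_fam H2 S) H2) (deg_formula Hpo (charS_fam H2 S') H2) /Dset !(charS_supp H2).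
  move=> e2; have := cardsC (ups le S); have := cardsC (ups le S').
  rewrite e2 => <-; by move/addIn.
Qed.
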